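(* Let $\alpha\in\mathbb{N}_0$ and $N>0$. For every $n\in\mathbb{N}_0$ the Laguerre-type polynomial $L_n^{\alpha,N}$ satisfies, for $0\le x<\infty$, $$\Big\{\big[L_{2,x}^{\alpha}+n\big]+\frac{N}{(\alpha+2)!}\big[L_{2\alpha+4,x}^{\alpha}+(n)_{\alpha+2}\big]\Big\}L_n^{\alpha,N}(x)=0,$$ where for sufficiently smooth $y$, $$L_{2,x}^{\alpha}y(x)=e^x x^{-\alpha}D_x\big\{e^{-x}x^{\alpha+1}D_x y(x)\big\},\qquad L_{2\alpha+4,x}^{\alpha}y(x)=(-1)^{\alpha+1}e^x x\,D_x^{\alpha+2}\big\{e^{-x}D_x^{\alpha+2}[x^{\alpha+1}y(x)]\big\}.$$
   Context: $D_x^i$ denotes the $i$-fold derivative in $x$; $(a)_k=a(a+1)\cdots(a+k-1)$ is the Pochhammer symbol. For $\gamma>-1$, $L_n^{\gamma}(x)=\frac{(\gamma+1)_n}{n!}\,{}_1F_1(-n;\gamma+1;x)$ are the classical Laguerre polynomials. The Laguerre-type polynomials are $L_n^{\alpha,N}(x)=L_n^{\alpha}(x)+N\,T_n^{\alpha}(x)$, where $T_0^{\alpha}=0$ and for $n\ge1$, $T_n^{\alpha}(x)=-t_n^{\alpha}\,x\,L_{n-1}^{\alpha+2}(x)$ with $t_n^{\alpha}=(\alpha+2)_{n-1}/n!$. Note $L_{2,x}^{\alpha}=xD_x^2+(\alpha+1-x)D_x$. *)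

(* Defs.v *)
From Stdlib Require Import Arith Reals Lra ClassicalEpsilon.
Open Scope R_scope.

(* Derivative of a real function, as a total function: the (unique) limit
   l with derivable_pt_lim f x l when it exists, 0 otherwise. *)
Definition Dx (f : R -> R) : R -> R := fun x =>
  match excluded_middle_informative (exists l, derivable_pt_lim f x l) with
  | left H => proj1_sig (constructive_indefinite_description _ H)
  | right _ => 0
  end.

Definition Dxn (i : nat) (f : R -> R) : R -> R := Nat.iter i Dx f.

Fixpoint poch (a : R) (k : nat) : R :=
  match k with
  | O => 1
  | S k' => poch a k' * (a + INR k')
  end.

(* Classical Laguerre polynomial
   L_n^g(x) = (g+1)_n/n! * 1F1(-n; g+1; x)
            = (g+1)_n/n! * sum_{k=0}^n (-n)_k / ((g+1)_k k!) x^k. *)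
Definition Laguerre (n : nat) (g : R) (x : R) : R :=
  poch (g + 1) n / INR (fact n) *
  sum_f_R0 (fun k => poch (- INR n) k / (poch (g + 1) k * INR (fact k)) * x ^ k) n.

Definition tcoef (n : nat) (a : R) : R := poch (a + 2) (n - 1) / INR (fact n).

Definition Tpoly (n : nat) (a : R) (x : R) : R :=
  match n with
  | O => 0
  | S m => - tcoef n a * x * Laguerre m (a + 2) x
  end.

Definition LaguerreType (n : nat) (a N : R) (x : R) : R :=
  Laguerre n a x + N * Tpoly n a x.

Definition L2op (a : R) (y : R -> R) (x : R) : R :=
  x * Dxn 2 y x + (a + 1 - x) * Dx y x.

Definition L2a4op (a : nat) (y : R -> R) (x : R) : R :=
  (-1) ^ (a + 1) * exp x * x *
  Dxn (a + 2) (fun t => exp (- t) * Dxn (a + 2) (fun s => s ^ (a + 1) * y s) t) x.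

(* Main.v *)
Require Import Defs.
From Stdlib Require Import Arith Reals.
From Stdlib Require Import Lra Lia FunctionalExtensionality ClassicalEpsilon.
Open Scope R_scope.

Lemma Dx_eq (f g : R -> R) : (forall x, derivable_pt_lim f x (g x)) -> Defs.Dx f = g.
Proof.
  intros H. apply functional_extensionality; intro x. unfold Defs.Dx.
  destruct (excluded_middle_informative _) as [e|n].
  - destruct (constructive_indefinite_description _ e) as [l Hl]. simpl.
    exact (uniqueness_limite f x l (g x) Hl (H x)).
  - exfalso; apply n; exists (g x); auto.
Qed.

Definition pe (c : nat -> R) (d : nat) (x : R) : R := sum_f_R0 (fun k => c k * x ^ k) d.
Definition dc (c : nat -> R) : nat -> R := fun k => INR (S k) * c (S k).
Definition xc (c : nat -> R) : nat -> R := fun k => match k with O => 0 | S j => c j end.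
Definition supp (c : nat -> R) (d : nat) := forall k, (d < k)%nat -> c k = 0.

Lemma pe_S c d x : pe c (S d) x = pe c d x + c (S d) * x ^ (S d).
Proof. reflexivity. Qed.

Lemma pe_der_S c d x : derivable_pt_lim (pe c (S d)) x (pe (dc c) d x).
Proof.
  induction d.
  - unfold pe, dc; simpl.
    replace (1 * c 1%nat * 1) with (0 + (c 1%nat * (INR 1 * x ^ 0))) by (simpl; ring).
    apply derivable_pt_lim_plus.
    + replace (fun x => c 0%nat * 1) with (fun _ : R => c 0%nat * 1) by reflexivity.
      apply derivable_pt_lim_const.
    + apply derivable_pt_lim_scal. 
      replace (fun x : R => x * 1) with (fun x : R => x ^ 1) by (apply functional_extensionality; intro; simpl; ring).
      apply derivable_pt_lim_pow.
  - replace (pe c (S (S d))) with (fun x => pe c (S d) x + c (S (S d)) * x ^ (S (S d)))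
      by (apply functional_extensionality; intro; reflexivity).
    rewrite pe_S. unfold dc at 2.
    replace (INR (S (S d)) * c (S (S d)) * x ^ S d) with (c (S (S d)) * (INR (S (S d)) * x ^ pred (S (S d)))) by (simpl; ring).
    apply derivable_pt_lim_plus; [exact IHd|].
    apply derivable_pt_lim_scal. apply derivable_pt_lim_pow.
Qed.

Lemma pe_der c d x : supp c d -> derivable_pt_lim (pe c d) x (pe (dc c) d x).
Proof.
  intros Hs. destruct d.
  - unfold pe, dc; simpl. rewrite (Hs 1%nat) by lia.
    replace (1 * 0 * 1) with 0 by ring. apply derivable_pt_lim_const.
  - rewrite pe_S. unfold dc at 2. rewrite (Hs (S (S d))) by lia.
    replace (pe (dc c) d x + INR (S (S d)) * 0 * x ^ S d) with (pe (dc c) d x) by ring.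
    apply pe_der_S.
Qed.

Lemma supp_dc c d : supp c d -> supp (dc c) d.
Proof. intros H k Hk. unfold dc. rewrite H by lia. ring. Qed.
Lemma supp_xc c d : supp c d -> supp (xc c) (S d).
Proof. intros H k Hk. destruct k; [lia|]. simpl. apply H; lia. Qed.

Lemma Dx_pe c d : supp c d -> Defs.Dx (pe c d) = pe (dc c) d.
Proof. intros H. apply Dx_eq. intros; apply pe_der; auto. Qed.

Lemma pe_widen c d e x : supp c d -> (d <= e)%nat -> pe c e x = pe c d x.
Proof.
  intros H Hle. induction Hle; auto.
  rewrite pe_S, IHHle, H by lia. ring.
Qed.

Lemma pe_ext c1 c2 d x : (forall k, c1 k = c2 k) -> pe c1 d x = pe c2 d x.
Proof. intros H; unfold pe; apply sum_eq; intros; rewrite H; auto. Qed.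

Lemma pe_plus c1 c2 d x : pe (fun k => c1 k + c2 k) d x = pe c1 d x + pe c2 d x.
Proof. unfold pe. rewrite <- plus_sum. apply sum_eq; intros; ring. Qed.

Lemma pe_scal r c d x : pe (fun k => r * c k) d x = r * pe c d x.
Proof. unfold pe. induction d; simpl; [ring|]. fold (pe c d x). rewrite IHd. unfold pe. ring. Qed.

Lemma pe_x c d x : x * pe c d x = pe (xc c) (S d) x.
Proof.
  induction d.
  - unfold pe; simpl; ring.
  - rewrite pe_S, (pe_S (xc c)), <- IHd. simpl. ring.
Qed.

Lemma pe_zero c d x : (forall k, c k = 0) -> pe c d x = 0.
Proof. intros H. unfold pe. induction d; simpl; rewrite H; [ring|]. rewrite IHd; ring. Qed.

Lemma Dxn_pe i c d : supp c d -> Dxn i (pe c d) = pe (Nat.iter i dc c) d.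
Proof.
  intros H. induction i; [reflexivity|].
  change (Dxn (S i) (pe c d)) with (Defs.Dx (Dxn i (pe c d))). rewrite IHi.
  change (Nat.iter (S i) dc c) with (dc (Nat.iter i dc c)). apply Dx_pe.
  clear IHi. induction i; simpl; auto. apply supp_dc; auto.
Qed.

Lemma poch_S_front x i : poch x (S i) = x * poch (x + 1) i.
Proof.
  induction i; [simpl; ring|]. change (poch x (S (S i))) with (poch x (S i) * (x + INR (S i))).
  rewrite IHi. change (poch (x+1) (S i)) with (poch (x+1) i * (x+1+INR i)). rewrite S_INR. ring.
Qed.

Lemma iter_dc i c k : Nat.iter i dc c k = poch (INR k + 1) i * c (k + i)%nat.
Proof.
  revert k. induction i; intros k; simpl.
  - rewrite Nat.add_0_r; ring.
  - unfold dc. rewrite IHi.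
    change (poch (INR k + 1) i * (INR k + 1 + INR i)) with (poch (INR k + 1) (S i)).
    rewrite poch_S_front. rewrite S_INR.
    replace (S k + i)%nat with (k + S i)%nat by lia. ring.
Qed.

Lemma iter_xc j c k : Nat.iter j xc c (k + j)%nat = c k.
Proof.
  revert k. induction j; intros k; simpl.
  - rewrite Nat.add_0_r; auto.
  - replace (k + S j)%nat with (S (k + j)) by lia. simpl. auto.
Qed.

Lemma supp_iter_xc j c d : supp c d -> supp (Nat.iter j xc c) (j + d).
Proof. intros H. induction j; simpl; auto. apply supp_xc; auto. Qed.

Lemma pow_pe j c d x : x ^ j * pe c d x = pe (Nat.iter j xc c) (j + d) x.
Proof.
  induction j; simpl; [ring|]. rewrite Rmult_assoc, IHj. apply pe_x.
Qed.

Definition lc (n g k : nat) : R :=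
  poch (INR g + 1) n / INR (fact n) * (poch (- INR n) k / (poch (INR g + 1) k * INR (fact k))).

Lemma poch_f g n : poch (INR g + 1) n = INR (fact (g + n)) / INR (fact g).
Proof.
  induction n; simpl.
  - rewrite Nat.add_0_r. field. apply INR_fact_neq_0.
  - rewrite IHn. rewrite Nat.add_succ_r, fact_simpl, mult_INR, S_INR, plus_INR.
    field. apply INR_fact_neq_0.
Qed.

Lemma poch_neg_zero n k : (n < k)%nat -> poch (- INR n) k = 0.
Proof.
  intros H. induction k; [lia|]. simpl.
  destruct (Nat.eq_dec k n) as [->|Hne].
  - ring.
  - rewrite IHk by lia. ring.
Qed.

Lemma supp_lc n g : supp (lc n g) n.
Proof. intros k Hk. unfold lc. rewrite poch_neg_zero by auto. unfold Rdiv; ring. Qed.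

Lemma sum_scal A f d : A * sum_f_R0 f d = sum_f_R0 (fun k => A * f k) d.
Proof. induction d; simpl; [ring|]. rewrite <- IHd. ring. Qed.

Lemma Laguerre_pe n g x : Laguerre n (INR g) x = pe (lc n g) n x.
Proof.
  unfold Laguerre, pe, lc. rewrite sum_scal. apply sum_eq. intros; ring.
Qed.

Lemma lc_expstep m h k : lc m h k - INR (S k) * lc m h (S k) = lc m (S h) k.
Proof.
  unfold lc. rewrite !poch_f.
  change (poch (- INR m) (S k)) with (poch (- INR m) k * (- INR m + INR k)).
  rewrite !Nat.add_succ_r. simpl (S h + _)%nat.
  rewrite !fact_simpl, !mult_INR, !S_INR, !plus_INR.
  pose proof (pos_INR m); pose proof (pos_INR h); pose proof (pos_INR k).
  field. repeat split; try apply INR_fact_neq_0; lra.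
Qed.

Lemma dl_exp_neg x : derivable_pt_lim (fun t => exp (- t)) x (- exp (- x)).
Proof.
  assert (H := derivable_pt_lim_comp (fun t => - t) exp x (-1) (exp (- x))
     (derivable_pt_lim_opp _ _ _ (derivable_pt_lim_id x)) (derivable_pt_lim_exp (- x))).
  unfold comp in H. replace (- exp (- x)) with (exp (- x) * -1) by ring. exact H.
Qed.

Lemma dl_ext f g x l : (forall t, f t = g t) -> derivable_pt_lim f x l -> derivable_pt_lim g x l.
Proof. intros H; replace g with f; auto. apply functional_extensionality; auto. Qed.

Lemma dl_val f x l l' : l = l' -> derivable_pt_lim f x l -> derivable_pt_lim f x l'.
Proof. intros ->; auto. Qed.

Lemma exp_step m h C P Q x :
  derivable_pt_lim (fun t => C * exp (- t) * (P * pe (lc m (S h)) m t + Q * pe (lc m h) m t)) x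
    (- C * exp (- x) * (P * pe (lc m (S (S h))) m x + Q * pe (lc m (S h)) m x)).
Proof.
  assert (H1 : derivable_pt_lim (fun t => C * exp (- t)) x (C * - exp (- x))).
  { apply derivable_pt_lim_scal. apply dl_exp_neg. }
  assert (H2 : derivable_pt_lim (fun t => P * pe (lc m (S h)) m t + Q * pe (lc m h) m t) x
     (P * pe (dc (lc m (S h))) m x + Q * pe (dc (lc m h)) m x)).
  { apply (derivable_pt_lim_plus (fun t => P * pe (lc m (S h)) m t) (fun t => Q * pe (lc m h) m t));
    apply derivable_pt_lim_scal; apply pe_der; apply supp_lc. }
  assert (H := derivable_pt_lim_mult _ _ x _ _ H1 H2). unfold mult_fct in H.
  eapply dl_val; [|exact H].
  assert (E : forall g, pe (lc m (S g)) m x = pe (lc m g) m x - pe (dc (lc m g)) m x).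
  { intros g.
    replace (pe (lc m g) m x - pe (dc (lc m g)) m x) with (pe (fun k => lc m g k + (-1) * dc (lc m g) k) m x)
      by (rewrite pe_plus, pe_scal; ring). apply pe_ext.
    intros k. rewrite <- lc_expstep. unfold dc. ring. }
  rewrite (E (S h)), (E h). ring.
Qed.

Lemma Dxn_exp i m h C P Q :
  Dxn i (fun t => C * exp (- t) * (P * pe (lc m (S h)) m t + Q * pe (lc m h) m t)) =
  (fun t => (C * (-1) ^ i) * exp (- t) * (P * pe (lc m (S h + i)) m t + Q * pe (lc m (h + i)) m t)).
Proof.
  induction i.
  - apply functional_extensionality; intro t. rewrite !Nat.add_0_r. simpl. ring_simplify. reflexivity.
  - change (Dxn (S i) ?f) with (Defs.Dx (Dxn i f)). rewrite IHi.
    apply Dx_eq. intros x. eapply dl_val; [|apply (exp_step m (h + i))].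
    replace (S h + i)%nat with (S (h + i)) by lia.
    replace (S h + S i)%nat with (S (S (h + i))) by lia.
    replace (h + S i)%nat with (S (h + i)) by lia. simpl. ring.
Qed.

Lemma pn1 m i : poch (- INR (S m)) (S i) = - INR (S m) * poch (- INR m) i.
Proof. rewrite poch_S_front. f_equal. f_equal. rewrite S_INR; ring. Qed.
Lemma poch_Sd x i : poch x (S i) = poch x i * (x + INR i).
Proof. reflexivity. Qed.
Lemma poch_f' g n : poch (INR g + 2) n = INR (fact (S g + n)) / INR (fact (S g)).
Proof. rewrite <- poch_f. f_equal. rewrite S_INR. ring. Qed.

Lemma I1 (a m k : nat) (N : R) :
 poch (INR k + 1) (a+2) * (lc (S m) a (S k) + - (N * (poch (INR a + 2) m / INR (fact (S m)))) * lc m (a+2) k) =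
 (-(INR a + 1) * INR (fact (m+1+a)) / INR (fact (S m))) * lc m 1 k
 + (- INR (fact (m+a+1)) / INR (fact m) - N * (poch (INR a + 2) m / INR (fact (S m))) * INR (fact (m+a+2)) / INR (fact m)) * lc m 0 k.
Proof.
  unfold lc. rewrite pn1. rewrite poch_f'. rewrite !poch_f.
  set (u := poch (- INR m) k).
  replace (k + (a+2))%nat with (S (S (a + k))) by lia.
  replace (a + S m)%nat with (S (a + m)) by lia.
  replace (a + S k)%nat with (S (a + k)) by lia.
  replace (a + 2 + m)%nat with (S (S (a + m))) by lia.
  replace (a + 2 + k)%nat with (S (S (a + k))) by lia.
  replace (a + 2)%nat with (S (S a)) by lia.
  replace (S a + m)%nat with (S (a + m)) by lia.
  replace (m + 1 + a)%nat with (S (a + m)) by lia.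
  replace (m + a + 1)%nat with (S (a + m)) by lia.
  replace (m + a + 2)%nat with (S (S (a + m))) by lia.
  replace (1 + m)%nat with (S m) by lia.
  replace (1 + k)%nat with (S k) by lia.
  replace (0 + m)%nat with m by lia.
  replace (0 + k)%nat with k by lia.
  rewrite !fact_simpl, !mult_INR, !S_INR, !plus_INR.
  change (fact 0) with 1%nat. change (INR 0) with 0. change (INR 1) with 1.
  pose proof (pos_INR m); pose proof (pos_INR k); pose proof (pos_INR a).
  pose proof (INR_fact_neq_0 m); pose proof (INR_fact_neq_0 k); pose proof (INR_fact_neq_0 a);
  pose proof (INR_fact_neq_0 (a+m)); pose proof (INR_fact_neq_0 (a+k)).
  field. repeat split; try assumption; lra.
Qed.

Definition tcf a m := poch (INR a + 2) m / INR (fact (S m)).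
Definition Yc a m N := fun i => lc (S m) a i + - (N * tcf a m) * xc (lc m (a+2)) i.
Definition Pc a m := -(INR a + 1) * INR (fact (m+1+a)) / INR (fact (S m)).
Definition Qc a m N := - INR (fact (m+a+1)) / INR (fact m) - N * tcf a m * INR (fact (m+a+2)) / INR (fact m).

Lemma poch_Sm m k : poch (INR (S m)) k = INR (fact (m + k)) / INR (fact m).
Proof. rewrite <- poch_f. f_equal. rewrite S_INR; ring. Qed.

Ltac normf a m :=
  repeat (rewrite ?Nat.add_succ_r, ?Nat.add_succ_l, ?Nat.add_0_r, ?Nat.add_0_l);
  rewrite ?(Nat.add_comm m a);
  rewrite !fact_simpl, !mult_INR, !S_INR, ?plus_INR;
  change (fact 0) with 1%nat; change (INR 0) with 0; change (INR 1) with 1.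

Lemma I2 a m N k :
  xc (dc (dc (Yc a m N))) k + (INR a + 1) * dc (Yc a m N) k + (-1) * xc (dc (Yc a m N)) k
  + INR (S m) * Yc a m N k
  + N / INR (fact (a+2)) * ((-1) * (Pc a m * xc (lc m (a+3)) k + Qc a m N * xc (lc m (a+2)) k)
                           + poch (INR (S m)) (a+2) * Yc a m N k) = 0.
Proof.
  unfold Yc, Pc, Qc, tcf, dc.
  destruct k as [|j]; cbn [xc].
  - unfold lc. rewrite !pn1. rewrite poch_Sm, poch_f', !poch_f.
    normf a m. simpl poch.
    pose proof (pos_INR m); pose proof (pos_INR a).
    pose proof (INR_fact_neq_0 m); pose proof (INR_fact_neq_0 a);
    pose proof (INR_fact_neq_0 (a+m)).
    field. repeat split; try assumption; lra.
  - unfold lc. rewrite !pn1. rewrite !poch_Sd. rewrite poch_Sm, poch_f', !poch_f.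
    set (u := poch (- INR m) j).
    normf a m.
    pose proof (pos_INR m); pose proof (pos_INR a); pose proof (pos_INR j).
    pose proof (INR_fact_neq_0 m); pose proof (INR_fact_neq_0 a); pose proof (INR_fact_neq_0 j);
    pose proof (INR_fact_neq_0 (a+m)); pose proof (INR_fact_neq_0 (a+j)).
    field. repeat split; try assumption; lra.
Qed.

Lemma supp_Yc a m N : supp (Yc a m N) (S m).
Proof.
  intros k Hk. unfold Yc. rewrite (supp_lc (S m) a k Hk).
  destruct k; [lia|]. cbn [xc]. rewrite (supp_lc m (a+2) k) by lia. ring.
Qed.

Lemma y_pe a m N : LaguerreType (S m) (INR a) N = pe (Yc a m N) (S m).
Proof.
  apply functional_extensionality; intro t.
  unfold LaguerreType, Tpoly.
  replace (tcoef (S m) (INR a)) with (tcf a m)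
    by (unfold tcoef, tcf; replace (S m - 1)%nat with m by lia; reflexivity).
  replace (INR a + 2) with (INR (a + 2)) by (rewrite plus_INR; simpl; ring).
  rewrite !Laguerre_pe. unfold Yc. rewrite pe_plus, pe_scal, <- pe_x. ring.
Qed.

Lemma pow_m1 k : (-1) ^ (k + 1) * (-1) ^ (k + 2) = -1.
Proof.
  rewrite <- pow_add. replace (k + 1 + (k + 2))%nat with (S (2 * (k + 1))) by lia.
  rewrite <- tech_pow_Rmult, pow_mult. replace ((-1)^2) with 1 by ring. rewrite pow1. ring.
Qed.

Lemma inner_eq a m N :
  Dxn (a + 2) (fun s => s ^ (a + 1) * LaguerreType (S m) (INR a) N s) =
  (fun t => Pc a m * pe (lc m 1) m t + Qc a m N * pe (lc m 0) m t).
Proof.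
  rewrite y_pe.
  replace (fun s => s ^ (a + 1) * pe (Yc a m N) (S m) s) with (pe (Nat.iter (a+1) xc (Yc a m N)) (a + 1 + S m))
    by (apply functional_extensionality; intro; rewrite pow_pe; reflexivity).
  rewrite Dxn_pe by (apply supp_iter_xc, supp_Yc).
  apply functional_extensionality; intro t.
  assert (HZ : forall k, Nat.iter (a+2) dc (Nat.iter (a+1) xc (Yc a m N)) k = poch (INR k + 1) (a+2) * Yc a m N (S k)).
  { intros k. rewrite iter_dc. replace (k + (a+2))%nat with (S k + (a+1))%nat by lia. rewrite iter_xc. reflexivity. }
  rewrite (pe_widen _ m) by (try lia; intros k Hk; rewrite HZ, (supp_Yc a m N (S k)) by lia; ring).
  rewrite <- !pe_scal, <- pe_plus. apply pe_ext. intros k. rewrite HZ.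
  unfold Yc. cbn [xc]. rewrite I1. unfold Pc, Qc, tcf. reflexivity.
Qed.

Definition Wf a m N := fun k =>
  xc (dc (dc (Yc a m N))) k + (INR a + 1) * dc (Yc a m N) k + (-1) * xc (dc (Yc a m N)) k
  + INR (S m) * Yc a m N k
  + N / INR (fact (a+2)) * ((-1) * (Pc a m * xc (lc m (a+3)) k + Qc a m N * xc (lc m (a+2)) k)
                           + poch (INR (S m)) (a+2) * Yc a m N k).

Lemma main_S (alpha m : nat) (N : R) (x : R) :
  (L2op (INR alpha) (LaguerreType (S m) (INR alpha) N) x
     + INR (S m) * LaguerreType (S m) (INR alpha) N x)
  + N / INR (fact (alpha + 2)) *
    (L2a4op alpha (LaguerreType (S m) (INR alpha) N) x
     + poch (INR (S m)) (alpha + 2) * LaguerreType (S m) (INR alpha) N x) = 0.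
Proof.
  set (a := alpha).
  unfold L2a4op. rewrite inner_eq.
  replace (fun t => exp (- t) * (Pc a m * pe (lc m 1) m t + Qc a m N * pe (lc m 0) m t))
    with (fun t => 1 * exp (- t) * (Pc a m * pe (lc m (S 0)) m t + Qc a m N * pe (lc m 0) m t))
    by (apply functional_extensionality; intro; ring).
  rewrite Dxn_exp.
  unfold L2op. rewrite y_pe.
  change (Dxn 2 (pe (Yc a m N) (S m))) with (Defs.Dx (Defs.Dx (pe (Yc a m N) (S m)))).
  rewrite !Dx_pe by (try apply supp_dc; apply supp_Yc).
  replace (S 0 + (a + 2))%nat with (a + 3)%nat by lia.
  replace (0 + (a + 2))%nat with (a + 2)%nat by lia.
  transitivity (pe (Wf a m N) (S (S m)) x).
  2: { apply pe_zero. intros k. apply I2. }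
  unfold Wf. repeat rewrite ?pe_plus, ?pe_scal.
  assert (HY := supp_Yc a m N).
  rewrite (pe_widen (dc (Yc a m N)) (S m) (S (S m))) by (try lia; apply supp_dc; auto).
  rewrite (pe_widen (Yc a m N) (S m) (S (S m))) by (try lia; auto).
  rewrite (pe_widen (xc (lc m (a+3))) (S m) (S (S m))) by (try lia; apply supp_xc, supp_lc).
  rewrite (pe_widen (xc (lc m (a+2))) (S m) (S (S m))) by (try lia; apply supp_xc, supp_lc).
  rewrite <- !pe_x.
  assert (E : forall Z, (-1) ^ (a + 1) * exp x * x * (1 * (-1) ^ (a + 2) * exp (- x) * Z) = - x * Z).
  { intros Z. rewrite exp_Ropp. pose proof (pow_m1 a). pose proof (exp_pos x).
    replace ((-1) ^ (a + 1) * exp x * x * (1 * (-1) ^ (a + 2) * / exp x * Z))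
      with (((-1) ^ (a + 1) * (-1) ^ (a + 2)) * (exp x * / exp x) * x * Z) by ring.
    rewrite H, Rinv_r by lra. ring. }
  rewrite E. ring.
Qed.

Lemma Dxn_zero i : Dxn i (fun _ : R => 0) = (fun _ => 0).
Proof.
  induction i; [reflexivity|].
  change (Dxn (S i) ?f) with (Defs.Dx (Dxn i f)). rewrite IHi.
  apply Dx_eq. intros; apply derivable_pt_lim_const.
Qed.

Lemma main_0 (alpha : nat) (N : R) (x : R) :
  (L2op (INR alpha) (LaguerreType 0 (INR alpha) N) x
     + INR 0 * LaguerreType 0 (INR alpha) N x)
  + N / INR (fact (alpha + 2)) *
    (L2a4op alpha (LaguerreType 0 (INR alpha) N) x
     + poch (INR 0) (alpha + 2) * LaguerreType 0 (INR alpha) N x) = 0.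
Proof.
  set (a := alpha).
  assert (Hy : LaguerreType 0 (INR a) N = pe (lc 0 a) 0).
  { apply functional_extensionality; intro t. unfold LaguerreType, Tpoly. rewrite Laguerre_pe. ring. }
  assert (Hp : poch (INR 0) (a + 2) = 0).
  { replace (a + 2)%nat with (S (S a)) by lia. rewrite poch_S_front. change (INR 0) with 0. ring. }
  unfold L2a4op, L2op. rewrite Hy, Hp.
  replace (fun s => s ^ (a + 1) * pe (lc 0 a) 0 s) with (pe (Nat.iter (a+1) xc (lc 0 a)) (a + 1 + 0))
    by (apply functional_extensionality; intro; rewrite pow_pe; reflexivity).
  rewrite (Dxn_pe (a+2)) by (apply supp_iter_xc, supp_lc).
  replace (fun t => exp (- t) * pe (Nat.iter (a + 2) dc (Nat.iter (a + 1) xc (lc 0 a))) (a + 1 + 0) t)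
    with (fun _ : R => 0).
  2: { apply functional_extensionality; intro t. rewrite pe_zero; [ring|].
       intros k. rewrite iter_dc. replace (k + (a+2))%nat with (S k + (a+1))%nat by lia. rewrite iter_xc.
       rewrite (supp_lc 0 a (S k)) by lia. ring. }
  rewrite Dxn_zero.
  change (Dxn 2 (pe (lc 0 a) 0)) with (Defs.Dx (Defs.Dx (pe (lc 0 a) 0))).
  rewrite !Dx_pe by (try apply supp_dc; apply supp_lc).
  unfold pe, dc; simpl sum_f_R0. rewrite (supp_lc 0 a 2%nat), (supp_lc 0 a 1%nat) by lia. change (INR 0) with 0. ring.
Qed.

Theorem theorem2p1 (alpha n : nat) (N : R) (HN : 0 < N) (x : R) (Hx : 0 <= x) :
  (L2op (INR alpha) (LaguerreType n (INR alpha) N) x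
     + INR n * LaguerreType n (INR alpha) N x)
  + N / INR (fact (alpha + 2)) *
    (L2a4op alpha (LaguerreType n (INR alpha) N) x
     + poch (INR n) (alpha + 2) * LaguerreType n (INR alpha) N x) = 0.
Proof. destruct n; [apply main_0 | apply main_S]. Qed.
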